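(* Let $n,d,e,f$ be positive integers with $d\mid n$ and $\gcd(e,n/d)=1$. Then $I_{n,de}=I_{n,d}$ and $I_{n,f}=I_{n,\gcd(n,f)}$. Moreover $$I_{n,d}=\sum_{k=0}^{\lfloor d/2\rfloor}\frac{d!\,(n/d)^k\,\bigl(2-(n/d \bmod 2)\bigr)^{d-2k}}{2^k k!\,(d-2k)!},$$ and in particular $I_n=\sum_{k=0}^{\lfloor n/2\rfloor}\frac{n!}{2^k k!(n-2k)!}$.
   Context: For positive integers $n,d$ and an $n$-cycle $\zeta\in S_n$, $I_{n,d}$ is the number of $\tau\in S_n$ with $\tau^2=1$ and $\tau\zeta^d=\zeta^d\tau$ (independent of the choice of $\zeta$), and $I_n:=I_{n,n}$. Here $n\bmod 2\in\{0,1\}$ is the remainder of $n$ upon division by $2$. *)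

(* Defs.v *)
From mathcomp Require Import all_boot all_order all_algebra all_fingroup.
Set Implicit Arguments. Unset Strict Implicit. Unset Printing Implicit Defensive.

Definition is_ncycle (n : nat) (zeta : {perm 'I_n}) : Prop :=
  exists x : 'I_n, porbit zeta x = [set: 'I_n].

(* I_{n,d} computed w.r.t. the n-cycle zeta: number of involutions (or the
   identity) tau in S_n with tau * zeta^d = zeta^d * tau. *)
Definition Ind (n : nat) (zeta : {perm 'I_n}) (d : nat) : nat :=
  #|[set tau : {perm 'I_n} | (tau * tau == 1)%g &&
                             (tau * zeta ^+ d == zeta ^+ d * tau)%g]|.

(* Main.v *)
Require Import Defs.
From mathcomp Require Import all_boot all_order all_algebra all_fingroup all_solvable.
From mathcomp Require Import zify ring.
Set Implicit Arguments. Unset Strict Implicit. Unset Printing Implicit Defensive.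

Section Mk.
Variable T : finType.
Definition mkp (f : T -> T) : {perm T} := insubd (1%g : {perm T}) (finfun f).
Lemma mkpE f : involutive f -> mkp f =1 f.
Proof.
move=> Hf x.
have inj : injective f by apply: inv_inj.
have Hb : injectiveb (finfun f).
  by apply/injectiveP => y z; rewrite !ffunE; apply: inj.
by rewrite /mkp -pvalE insubdK ?ffunE.
Qed.
End Mk.


Section Gen.
Variable T : finType.
Variable s : {perm T}.
Implicit Types (U W : {set T}) (t g h : {perm T}) (a x y : T).
Hypothesis semireg : forall (g : {perm T}) x, g \in <[s]>%g -> g x = x -> g = 1%g.
Hypothesis trans : forall a y : T, exists2 g : {perm T}, commute g s & g a = y.

Definition SU (U : {set T}) := [set t : {perm T} | [&& (t * t == 1)%g,
   (t * s == s * t)%g & [forall x, (x \notin U) ==> (t x == x)]]].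
Definition sinv (U : {set T}) := forall x, (s x \in U) = (x \in U).

Lemma SUP U t : reflect [/\ forall x, t (t x) = x, forall x, t (s x) = s (t x)
   & forall x, x \notin U -> t x = x] (t \in SU U).
Proof.
rewrite inE; apply: (iffP and3P) => [[/eqP H1 /eqP H2 /forallP H3]|[H1 H2 H3]].
  split=> [x|x|x xU].
  - by have := congr1 (fun p : {perm T} => p x) H1; rewrite permM perm1.
  - by have := congr1 (fun p : {perm T} => p x) H2; rewrite !permM.
  - by have /implyP/(_ xU)/eqP := H3 x.
split.
- by apply/eqP/permP => x; rewrite permM perm1 H1.
- by apply/eqP/permP => x; rewrite !permM H2.
- by apply/forallP => x; apply/implyP => xU; rewrite H3.
Qed.

Lemma commX (t : {perm T}) : (forall x, t (s x) = s (t x)) ->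
  forall i x, t ((s ^+ i)%g x) = (s ^+ i)%g (t x).
Proof.
move=> H; elim=> [|i IH] x; first by rewrite !expg0 !perm1.
by rewrite expgS !permM IH H.
Qed.

Lemma sinvX U : sinv U -> forall i x, ((s ^+ i)%g x \in U) = (x \in U).
Proof.
move=> H; elim=> [|i IH] x; first by rewrite expg0 perm1.
by rewrite expgS permM IH H.
Qed.

Lemma orbit_s a x : (s x \in porbit s a) = (x \in porbit s a).
Proof. by rewrite -!eq_porbit_mem; have := porbit_perm s 1 x; rewrite expg1 => ->. Qed.

Lemma card_orbitS a : #|porbit s a| = #[s]%g.
Proof.
rewrite porbit.unlock card_in_imset // => g h gs hs /= eq_gh.
apply/eqP; rewrite eq_mulgV1; apply/eqP; apply: (semireg (x := a)).
  by rewrite groupM ?groupV.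
by move: eq_gh; rewrite /aperm permM => ->; rewrite -permM mulgV perm1.
Qed.

Lemma SU_in U t x : t \in SU U -> x \in U -> t x \in U.
Proof.
case/SUP=> H1 _ H3 xU; apply/negPn/negP => txU.
have E := H3 _ txU; rewrite H1 in E.
by move: txU; rewrite -E xU.
Qed.

Section Bij.
Variables (U : {set T}) (a y : T) (t0 : {perm T}).
Hypotheses (Uinv : sinv U) (aU : a \in U) (t0S : t0 \in SU U) (t0a : t0 a = y).
Let W := porbit s a :|: porbit s y.
Let A := [set t in SU U | t a == y].
Let B := SU (U :\: W).

Lemma Ws x : (s x \in W) = (x \in W).
Proof. by rewrite !inE !orbit_s. Qed.

Lemma yU : y \in U.
Proof. by rewrite -t0a SU_in. Qed.

Lemma WU : W \subset U.
Proof.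
apply/subsetP => x; rewrite inE => /orP[] /porbitP[i ->]; rewrite sinvX //.
exact: yU.
Qed.

Lemma tW t : t \in SU U -> t a = y -> forall x, x \in W -> t x = t0 x /\ t x \in W.
Proof.
move=> tS ta x; case/SUP: (tS) => H1 H2 H3; case/SUP: (t0S) => K1 K2 K3.
rewrite inE => /orP[] /porbitP[i ->].
  rewrite !commX // ta t0a; split => //.
  by rewrite inE mem_porbit orbT.
have ty : t y = a by rewrite -ta H1.
have t0y : t0 y = a by rewrite -t0a K1.
rewrite !commX // ty t0y; split => //.
by rewrite inE mem_porbit.
Qed.

Lemma tWc t : t \in SU U -> t a = y -> forall x, x \notin W -> t x \notin W.
Proof.
move=> tS ta x xW; apply/negP => /(tW tS ta) [_].
by case/SUP: tS => H1 _ _; rewrite H1; apply/negP.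
Qed.

Definition cutf t := fun x => if x \in W then x else t x.
Definition gluef t := fun x => if x \in W then t0 x else t x.

Lemma cut_inv t : t \in A -> involutive (cutf t).
Proof.
rewrite inE => /andP[tS /eqP ta] x; rewrite /cutf.
have [xW|xW] := boolP (x \in W); first by rewrite !xW.
rewrite (negbTE (tWc tS ta xW)).
by case/SUP: tS => ->.
Qed.

Lemma B_fixW t x : t \in B -> x \in W -> t x = x.
Proof. by case/SUP => _ _ H3 xW; rewrite H3 // inE xW. Qed.

Lemma glue_inv t : t \in B -> involutive (gluef t).
Proof.
move=> tB x; rewrite /gluef.
have [xW|xW] := boolP (x \in W).
  have [_ ->] := tW t0S t0a xW.
  by case/SUP: t0S => ->.
have tx : t x \notin W.
  apply/negP => txW; move: (B_fixW tB txW); case/SUP: (tB) => -> _ _ E.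
  by rewrite E txW in xW.
by rewrite (negbTE tx); case/SUP: tB => ->.
Qed.

Lemma cut_in t : t \in A -> mkp (cutf t) \in B.
Proof.
move=> tA; have E := mkpE (cut_inv tA).
move: (tA); rewrite inE => /andP[tS /eqP ta].
case/SUP: (tS) => H1 H2 H3.
apply/SUP; split => [x|x|x]; rewrite ?E.
- exact: cut_inv.
- by rewrite /cutf Ws; case: ifP.
- rewrite /cutf inE negb_and negbK; case: ifP => //= _; exact: H3.
Qed.

Lemma glue_in t : t \in B -> mkp (gluef t) \in A.
Proof.
move=> tB; have E := mkpE (glue_inv tB).
case/SUP: (tB) => H1 H2 H3; case/SUP: (t0S) => K1 K2 K3.
rewrite inE; apply/andP; split; last first.
  by rewrite E /gluef inE porbit_id t0a.
apply/SUP; split => [x|x|x]; rewrite ?E.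
- exact: glue_inv.
- by rewrite /gluef Ws; case: ifP.
- move=> xU; rewrite /gluef; have xW : x \notin W.
    by apply/negP => /(subsetP WU); apply/negP.
  by rewrite (negbTE xW) H3 // inE negb_and xU orbT.
Qed.

Lemma glue_cut t : t \in A -> mkp (gluef (mkp (cutf t))) = t.
Proof.
move=> tA; apply/permP => x.
rewrite (mkpE (glue_inv (cut_in tA))) /gluef (mkpE (cut_inv tA)) /cutf.
move: tA; rewrite inE => /andP[tS /eqP ta].
by have [xW|xW] := boolP (x \in W); [have [-> _] := tW tS ta xW|].
Qed.

Lemma cut_glue t : t \in B -> mkp (cutf (mkp (gluef t))) = t.
Proof.
move=> tB; apply/permP => x.
rewrite (mkpE (cut_inv (glue_in tB))) /cutf (mkpE (glue_inv tB)) /gluef.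
have [xW|xW] := boolP (x \in W); last by []. 
by rewrite B_fixW.
Qed.

Lemma bij_card : #|A| = #|B|.
Proof.
apply/eqP; rewrite eqn_leq; apply/andP; split.
  rewrite -(card_in_imset (f := fun t => mkp (cutf t)) (D := A)); last first.
    by apply: (can_in_inj (g := fun t => mkp (gluef t))) => t tA; apply: glue_cut.
  by apply: subset_leq_card; apply/subsetP => _ /imsetP[t tA ->]; apply: cut_in.
rewrite -(card_in_imset (f := fun t => mkp (gluef t)) (D := B)); last first.
  by apply: (can_in_inj (g := fun t => mkp (cutf t))) => t tA; apply: cut_glue.
by apply: subset_leq_card; apply/subsetP => _ /imsetP[t tA ->]; apply: glue_in.
Qed.
End Bij.


Lemma sinvD U V : sinv U -> sinv V -> sinv (U :\: V).
Proof. by move=> HU HV x; rewrite !inE HU HV. Qed.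
Lemma sinvU U V : sinv U -> sinv V -> sinv (U :|: V).
Proof. by move=> HU HV x; rewrite !inE HU HV. Qed.
Lemma sinvO a : sinv (porbit s a).
Proof. by move=> x; rewrite orbit_s. Qed.
Lemma O_sub U a : sinv U -> a \in U -> porbit s a \subset U.
Proof. by move=> HU aU; apply/subsetP => x /porbitP[i ->]; rewrite sinvX. Qed.

Lemma SU0 : #|SU set0| = 1.
Proof.
apply/eqP; apply/cards1P; exists 1%g; apply/setP => t; rewrite in_set1.
apply/idP/eqP => [/SUP[_ _ H]|->].
  by apply/permP => x; rewrite perm1 H // inE.
by apply/SUP; split => x; rewrite ?perm1.
Qed.

Lemma cardD U W : W \subset U -> #|U :\: W| = #|U| - #|W|.
Proof. by move=> WU; rewrite cardsD (setIidPr WU). Qed.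

Lemma partition_count U a : a \in U ->
  #|SU U| = \sum_(y in U) #|[set t in SU U | t a == y]|.
Proof.
move=> aU; rewrite -sum1_card (partition_big (fun t : {perm T} => t a) (mem U)).
  by apply: eq_bigr => y _; rewrite sum1dep_card.
move=> t tS; exact: SU_in tS aU.
Qed.

Definition H2 := [set h : {perm T} in <[s]>%g | (h * h == 1)%g].
Definition Va a := [set (h : {perm T}) a | h in H2].

Lemma cyc_comm h : h \in <[s]>%g -> forall x, h (s x) = s (h x).
Proof.
case/cycleP => i -> x; rewrite -!permM.
by rewrite (commuteX i (commute_refl s)).
Qed.

Lemma count_O U a y : sinv U -> a \in U -> y \in porbit s a ->
  #|[set t in SU U | t a == y]| = (y \in Va a) * #|SU (U :\: porbit s a)|.
Proof.
move=> Uinv aU yO.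
have [yV|yV] := boolP (y \in Va a); last first.
  rewrite mul0n; apply/eqP; rewrite cards_eq0; apply/eqP/setP => t.
  rewrite in_set0; apply/negbTE/negP; rewrite inE => /andP[tS /eqP ta].
  case/porbitP: yO => i yE.
  have hs : (s ^+ i)%g \in <[s]>%g by apply: mem_cycle.
  case/SUP: (tS) => H1 H2 H3.
  have ty : t y = a by rewrite -{1}ta H1.
  have : ((s ^+ i) * (s ^+ i))%g a = a.
    by rewrite permM -yE -ty {2}yE commX // ta.
  move/(semireg (groupM hs hs)) => hh.
  move/negP: yV; apply; apply/imsetP; exists (s ^+ i)%g => //.
  by rewrite inE hs hh eqxx.
case/imsetP: yV => h; rewrite inE => /andP[hs /eqP hh] ->.
set O := porbit s a.
have hO : forall x, x \in O -> h x \in O.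
  move=> x xO; case/cycleP: hs => i ->.
  have -> : O = porbit s x by apply/eqP; rewrite eq_porbit_mem porbit_sym.
  exact: mem_porbit.
pose f := fun x => if x \in O then h x else x.
have finv : involutive f.
  move=> x; rewrite /f; case: (boolP (x \in O)) => xO; last by rewrite (negbTE xO).
  by rewrite hO // -permM hh perm1.
have t0S : mkp f \in SU U.
  apply/SUP; split => x; rewrite ?(mkpE finv) //.
    rewrite /f orbit_s; case: ifP => // _; exact: cyc_comm.
  move=> xU; rewrite /f; case: ifP => // xO.
  by move/negP: xU; case; apply: (subsetP (O_sub Uinv aU)).
have t0a : mkp f a = h a by rewrite (mkpE finv) /f porbit_id.
rewrite (bij_card Uinv aU t0S t0a).
have -> : porbit s (h a) = O by apply/eqP; rewrite eq_porbit_mem hO ?porbit_id.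
by rewrite setUid mul1n.
Qed.

Lemma count_notO U a y : sinv U -> a \in U -> y \in U -> y \notin porbit s a ->
  #|[set t in SU U | t a == y]| = #|SU (U :\: (porbit s a :|: porbit s y))|.
Proof.
move=> Uinv aU yU yO.
have [g gc ga] := trans a y.
set O := porbit s a; set Oy := porbit s y.
have gs : forall x, g (s x) = s (g x).
  by move=> x; rewrite -!permM gc.
have gis : forall x, g^-1%g (s x) = s (g^-1%g x).
  have gic : commute g^-1%g s := commute_sym (commuteV (commute_sym gc)).
  by move=> x; rewrite -!permM gic.
have gia : g^-1%g y = a by rewrite -ga permK.
have gO : forall x, x \in O -> g x \in Oy.
  by move=> x /porbitP[i ->]; rewrite commX // ga mem_porbit.
have giO : forall x, x \in Oy -> g^-1%g x \in O.
  by move=> x /porbitP[i ->]; rewrite commX // gia mem_porbit.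
have disj : forall x, x \in Oy -> x \notin O.
  move=> x xOy; apply/negP => xO; move/negP: yO; apply.
  have e1 : porbit s x = Oy by apply/eqP; rewrite eq_porbit_mem.
  have e2 : porbit s x = O by apply/eqP; rewrite eq_porbit_mem.
  by have := porbit_id s y; rewrite -/Oy -e1 e2.
pose f := fun x => if x \in O then g x else if x \in Oy then g^-1%g x else x.
have finv : involutive f.
  move=> x; rewrite /f; case: (boolP (x \in O)) => xO.
    by rewrite (negbTE (disj _ (gO _ xO))) (gO _ xO) permK.
  case: (boolP (x \in Oy)) => xOy; last by rewrite (negbTE xO) (negbTE xOy).
  by rewrite (giO _ xOy) permKV.
have t0S : mkp f \in SU U.
  apply/SUP; split => x; rewrite ?(mkpE finv) //.
    by rewrite /f !orbit_s; case: ifP => // _; case: ifP.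
  move=> xU; rewrite /f; case: ifP => xO.
    by move/negP: xU; case; apply: (subsetP (O_sub Uinv aU)).
  case: ifP => // xOy.
  by move/negP: xU; case; apply: (subsetP (O_sub Uinv yU)).
have t0a : mkp f a = y by rewrite (mkpE finv) /f porbit_id.
exact: (bij_card Uinv aU t0S t0a).
Qed.

Lemma orb_disj a y : y \notin porbit s a -> porbit s a :&: porbit s y = set0.
Proof.
move=> yO; apply/setP => x; rewrite !inE; apply/negbTE/negP => /andP[xa xy].
move/negP: yO; apply.
have e1 : porbit s x = porbit s y by apply/eqP; rewrite eq_porbit_mem.
have e2 : porbit s x = porbit s a by apply/eqP; rewrite eq_porbit_mem.
by rewrite -e2 e1 porbit_id.
Qed.

Lemma card_Va a : #|Va a| = #|H2|.
Proof.
rewrite card_in_imset // => g h; rewrite !inE => /andP[gs _] /andP[hs _] eq_gh.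
apply/eqP; rewrite eq_mulgV1; apply/eqP; apply: (semireg (x := a)).
  by rewrite groupM ?groupV.
by rewrite permM eq_gh -permM mulgV perm1.
Qed.

Lemma Va_sub a : Va a \subset porbit s a.
Proof. apply/subsetP.
move=> _ /imsetP[h hH ->]; move: hH; rewrite inE => /andP[/cycleP[i ->] _].
exact: mem_porbit.
Qed.

End Gen.

Fixpoint Fc (u m k : nat) : nat :=
  match k with
  | 0 => 1
  | j.+1 => u * Fc u m j + j * m * (match j with 0 => 0 | i.+1 => Fc u m i end)
  end.

Section Main.
Variable T : finType.
Variable s : {perm T}.
Hypothesis semireg : forall (g : {perm T}) x, g \in <[s]>%g -> g x = x -> g = 1%g.
Hypothesis trans : forall a y : T, exists2 g : {perm T}, commute g s & g a = y.

Theorem count_SU k (U : {set T}) : sinv s U -> #|U| = k * #[s]%g ->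
  #|SU s U| = Fc #|H2 s| #[s]%g k.
Proof.
move: U; induction k as [k IH] using ltn_ind; move=> U Uinv cU.
case: k IH cU => [|j] IH cU.
  have -> : U = set0 by apply/eqP; rewrite -cards_eq0 cU.
  by rewrite SU0.
have m0 := order_gt0 s.
have [a aU] : exists a, a \in U.
  by apply/set0Pn; rewrite -card_gt0 cU muln_gt0 m0.
rewrite (partition_count s aU) (big_setID (porbit s a)) /=.
have OU := O_sub Uinv aU.
rewrite (setIidPr OU).
have cO := card_orbitS semireg a.
have IHj : #|SU s (U :\: porbit s a)| = Fc #|H2 s| #[s]%g j.
  apply: IH => //; first by apply: sinvD => //; apply: sinvO.
  by rewrite cardD // cU cO mulSn addKn.
rewrite (eq_bigr (fun y => (y \in Va s a) * Fc #|H2 s| #[s]%g j)); last first.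
  by move=> y yO; rewrite count_O // IHj.
rewrite -big_distrl /=.
have -> : \sum_(i in porbit s a) (i \in Va s a) = #|H2 s|.
  rewrite (big_setID (Va s a)) /= (setIidPr (Va_sub s a)).
  rewrite (eq_bigr (fun _ => 1)); last by move=> i ->.
  rewrite sum1_card big1 ?addn0 ?(card_Va semireg) //.
  by move=> i; rewrite inE => /andP[/negbTE -> _].
congr (_ + _).
case: j IH cU IHj => [|i] IH cU IHj.
  have -> : U :\: porbit s a = set0.
    by apply/eqP; rewrite -cards_eq0 cardD // cU cO mul1n subnn.
  by rewrite mul0n big_set0.
rewrite (eq_bigr (fun _ => Fc #|H2 s| #[s]%g i)); last first.
  move=> y; rewrite inE => /andP[yO yU].
  rewrite (count_notO trans Uinv aU yU yO).
  apply: IH => //.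
    by apply: sinvD => //; apply: sinvU; apply: sinvO.
  have WU : porbit s a :|: porbit s y \subset U.
    by rewrite subUset OU (O_sub Uinv yU).
  rewrite cardD // cardsU orb_disj // cards0 subn0 cU !card_orbitS //.
  rewrite !mulSn; lia.
by rewrite sum_nat_const cardD // cU cO mulSn addKn.
Qed.
End Main.

Import GRing.Theory Num.Theory.

Section Alg.
Variables u m : nat.

Fixpoint df (k : nat) : nat := if k is k'.+1 then (2 * k').+1 * df k' else 1.

Lemma dfE k : df k * (2 ^ k * k`!) = (2 * k)`!.
Proof.
elim: k => [|k IH] //=.
have -> : 2 * k.+1 = (2 * k).+2 by lia.
rewrite !factS -IH expnS; ring.
Qed.

Definition tm k d := 'C(d, 2 * k) * df k * m ^ k * u ^ (d - 2 * k).
Definition Gr N d := \sum_(k < N) tm k d.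

Lemma tm0 k d : d < 2 * k -> tm k d = 0.
Proof. by move=> h; rewrite /tm bin_small. Qed.

Lemma Gr_ext d N : d < N -> Gr N d = Gr d.+1 d.
Proof.
elim: N => [//|N IH]; rewrite ltnS leq_eqVlt => /orP[/eqP->//|dN].
rewrite /Gr big_ord_recr /= tm0 ?addn0; last by lia.
exact: IH.
Qed.

Lemma tm_rec0 i : tm 0 i.+2 = u * tm 0 i.+1.
Proof. rewrite /tm !muln0 !bin0 !subn0 /= (expnS u i.+1); ring. Qed.

Lemma tm_rec k i : tm k.+1 i.+2 = u * tm k.+1 i.+1 + i.+1 * m * tm k i.
Proof.
rewrite /tm.
have -> : 2 * k.+1 = (2 * k).+2 by lia.
rewrite binS mulnDl mulnDl mulnDl mulnDr; congr (_ + _).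
  case: (leqP (2 * k).+2 i.+1) => h.
    rewrite subSn //= (expnS u); ring.
  by rewrite bin_small // !mul0n muln0.
rewrite subSS /=.
have := mul_bin_diag i.+1 (2 * k); rewrite /= => e.
have -> : 'C(i.+1, (2 * k).+1) * ((2 * k).+1 * df k) * m ^ k.+1 * u ^ (i - 2 * k)
  = ((2 * k).+1 * 'C(i.+1, (2 * k).+1)) * df k * m ^ k.+1 * u ^ (i - 2 * k) by ring.
rewrite -e (expnS m); ring.
Qed.

Definition G d := Gr d.+1 d.

Lemma G_rec i : G i.+2 = u * G i.+1 + i.+1 * m * G i.
Proof.
rewrite /G /Gr big_ord_recl tm_rec0.
rewrite (eq_bigr (fun k : 'I_i.+2 => u * tm (bump 0 k) i.+1 + i.+1 * m * tm k i)); last first.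
  by move=> k _; rewrite /bump /= add1n tm_rec.
rewrite big_split /= -!big_distrr /= addnA -mulnDr.
congr (u * _ + _).
  have e : i.+1 < i.+3 by [].
  by have := Gr_ext e; rewrite /Gr big_ord_recl => <-.
have e : i < i.+2 by [].
by have := Gr_ext e; rewrite /Gr => ->.
Qed.

Lemma Fc_G d : Fc u m d = G d.
Proof.
suff : Fc u m d = G d /\ Fc u m d.+1 = G d.+1 by case.
elim: d => [|d [IH1 IH2]].
  rewrite /G /Gr !big_ord_recr !big_ord0 /= /tm /=.
  by split => //; rewrite !muln0 !muln1 bin0 subn0 bin_small // expn1 mul0n mul1n addn0.
split => //.
by rewrite G_rec -IH1 -IH2 /=.
Qed.

Lemma G_rat d : ((G d)%:R : rat)%R =
  (\sum_(k < (d./2).+1)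
     (d`! * m ^ k * u ^ (d - 2 * k))%N%:R / (2 ^ k * k`! * (d - 2 * k)`!)%N%:R)%R.
Proof.
rewrite /G /Gr.
have -> : \sum_(k < d.+1) tm k d = \sum_(k < d.+1 | k < d./2.+1) tm k d.
  rewrite [RHS]big_mkcond /=; apply: eq_bigr => k _; case: ifP => // h.
  rewrite tm0 //; move/negbT: h; rewrite ltnS geq_half_double -ltnNge; lia.
rewrite -(big_ord_widen d.+1 (fun k => tm k d)); last by rewrite ltnS leq_half_double; lia.
rewrite natr_sum; apply: eq_bigr => k _.
have h2k : 2 * k <= d by rewrite mul2n -geq_half_double -ltnS.
have E : tm k d * (2 ^ k * k`! * (d - 2 * k)`!) = d`! * m ^ k * u ^ (d - 2 * k).
  by rewrite /tm -(bin_fact h2k) -dfE; ring.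
rewrite -E natrM GRing.mulfK // pnatr_eq0 -lt0n !muln_gt0 expn_gt0 !fact_gt0.
by [].
Qed.
End Alg.


Lemma H2_card (T : finType) (s : {perm T}) : #|H2 s| = 2 - #[s]%g %% 2.
Proof.
set m := #[s]%g.
have m0 : 0 < m := order_gt0 s.
have key : forall h, h \in H2 s -> exists2 i, i < m & h = (s ^+ i)%g /\ i + i = 0 \/ h = (s ^+ i)%g /\ i + i = m.
  move=> h; rewrite inE => /andP[/cyclePmin[i im ->] hh].
  exists i => //.
  have : m %| i + i by rewrite order_dvdn expgD.
  case/dvdnP => -[|[|q]] e.
  - by left.
  - by right; rewrite e mul1n.
  - exfalso; move: e; rewrite !mulSn; lia.
have one : (1%g : {perm T}) \in H2 s by rewrite inE group1 mulg1 eqxx.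
rewrite modn2; case: (boolP (odd m)) => om.
  suff -> : H2 s = [set 1%g] by rewrite cards1.
  apply/setP => h; rewrite in_set1; apply/idP/eqP => [hH|->] //.
  have [i im [[-> e]|[_ e]]] := key h hH.
    by have -> : i = 0 by lia.
  by move: om; rewrite -e addnn odd_double.
have hm : (s ^+ m./2)%g \in H2 s.
  rewrite inE mem_cycle -expgD addnn even_halfK // expg_order eqxx.
  done.
have ne : (1%g : {perm T}) != (s ^+ m./2)%g.
  rewrite eq_sym -order_dvdn; apply/negP => /dvdn_leq.
  have : 0 < m./2.
    rewrite half_gt0; move: om m0; case: (m) => [|[|]] //.
  move=> p /(_ p); rewrite leqNgt => /negP; apply.
  by rewrite ltn_half_double -addnn; lia.
suff -> : H2 s = [set 1%g; (s ^+ m./2)%g] by rewrite cards2 ne.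
apply/setP => h; rewrite in_set2; apply/idP/orP => [hH|[/eqP->|/eqP->]] //.
have [i im [[-> e]|[-> e]]] := key h hH.
  by left; have -> : i = 0 by lia.
right; rewrite -e addnn doubleK //.
Qed.

Section Zeta.
Variables (n : nat) (zeta : {perm 'I_n}).
Hypothesis Hz : is_ncycle zeta.

Lemma orbT_z x : porbit zeta x = [set: 'I_n].
Proof.
case: Hz => x0 H; rewrite -H; apply/eqP; rewrite eq_porbit_mem H; exact: in_setT.
Qed.

Lemma z_semireg g x : g \in <[zeta]>%g -> g x = x -> g = 1%g.
Proof.
case/cycleP => j -> gx; apply/permP => z; rewrite perm1.
have : z \in porbit zeta x by rewrite orbT_z in_setT.
case/porbitP => i ->.
by rewrite -permM -expgD addnC expgD permM gx.
Qed.

Lemma z_order : #[zeta]%g = n.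
Proof.
case: Hz => x0 H.
by rewrite -(card_orbitS z_semireg x0) H cardsT card_ord.
Qed.

Lemma Ind_count d : 0 < d -> d %| n ->
  Ind zeta d = Fc (2 - (n %/ d) %% 2) (n %/ d) d.
Proof.
move=> d0 dn.
set s := (zeta ^+ d)%g.
have semi : forall g x, g \in <[s]>%g -> g x = x -> g = 1%g.
  by move=> g x gs; apply: z_semireg; apply: (subsetP (cycleX zeta d)).
have tr : forall a y, exists2 g : {perm 'I_n}, commute g s & g a = y.
  move=> a y; have : y \in porbit zeta a by rewrite orbT_z in_setT.
  by case/porbitP => i ->; exists (zeta ^+ i)%g => //; apply: commuteX2.
have ms : #[s]%g = n %/ d by rewrite orderXdiv z_order.
have -> : Ind zeta d = #|SU s [set: 'I_n]|.
  rewrite /Ind /SU; apply: eq_card => t; rewrite !inE.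
  rewrite -[X in X = _]andbT -andbA; congr (_ && (_ && _)).
  by apply/esym/forallP => x; rewrite in_setT.
rewrite (@count_SU _ _ semi tr d [set: _]) ?H2_card ?ms //.
  by move=> x; rewrite !in_setT.
by rewrite cardsT card_ord mulnC divnK.
Qed.
End Zeta.


Lemma Ind_gcd n (zeta : {perm 'I_n}) f : is_ncycle zeta ->
  Ind zeta f = Ind zeta (gcdn n f).
Proof.
move=> Hz; set g := gcdn n f.
have cyc : <[zeta ^+ f]>%g = <[zeta ^+ g]>%g.
  apply/eqP; rewrite eqEcard; apply/andP; split.
    rewrite cycle_subG; have : g %| f by apply: dvdn_gcdr.
    by case/dvdnP => q ->; rewrite mulnC expgM mem_cycle.
  rewrite -!orderE !orderXgcd (z_order Hz).
  by have /gcdn_idPr -> : g %| n by apply: dvdn_gcdl.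
apply: eq_card => t; rewrite !inE; congr (_ && _).
by rewrite -!cent1E -!cent_cycle cyc.
Qed.

Theorem lemma6p2 (n d e f : nat) (zeta : {perm 'I_n}) :
  is_ncycle zeta -> 0 < n -> 0 < d -> 0 < e -> 0 < f ->
  d %| n -> coprime e (n %/ d) ->
  [/\ Ind zeta (d * e) = Ind zeta d,
      Ind zeta f = Ind zeta (gcdn n f),
      ((Ind zeta d)%:R =
        \sum_(k < (d./2).+1)
           (d`! * (n %/ d) ^ k * (2 - (n %/ d) %% 2) ^ (d - 2 * k))%N%:R
            / (2 ^ k * k`! * (d - 2 * k)`!)%N%:R :> rat)%R
    & ((Ind zeta n)%:R =
        \sum_(k < (n./2).+1)
           (n`!)%:R / (2 ^ k * k`! * (n - 2 * k)`!)%N%:R :> rat)%R].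
Proof.
move=> Hz n0 d0 e0 f0 dn cop.
have P2 := Ind_gcd f Hz.
split => //.
- rewrite (Ind_gcd (d * e) Hz) (Ind_gcd d Hz); congr Ind.
  have -> : gcdn n d = d by apply/gcdn_idPr.
  by rewrite -{1}(divnK dn) mulnC -muln_gcdr gcdnC (eqP cop) muln1.
- by rewrite (Ind_count Hz d0 dn) Fc_G G_rat.
- rewrite (Ind_count Hz n0 (dvdnn n)) Fc_G G_rat divnn n0.
  by apply: eq_bigr => k _; rewrite !exp1n !muln1.
Qed.
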